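(* The order $n[1,3;5]$ of a $[1,3;5]$-mixed cage satisfies $20\le n[1,3;5]\le 28$.
   Context: A mixed graph is a finite simple graph that may contain both edges and arcs. A $[z,r;g]$-mixed graph is a mixed graph in which every vertex is the tail of exactly $z$ arcs, the head of exactly $z$ arcs, and is incident with exactly $r$ edges, and whose girth is $g$. Walks traverse edges in either direction and arcs only in their direction; a cycle is a closed walk with no repeated vertices (other than start = end) and no repeated edge or arc; the girth is the length of a shortest cycle. A $[z,r;g]$-mixed cage is a $[z,r;g]$-mixed graph of minimum order, and $n[z,r;g]$ denotes its order. *)

(* Defs.v *)
From mathcomp Require Import all_boot.
Set Implicit Arguments. Unset Strict Implicit. Unset Printing Implicit Defensive.

Definition simple_mixed_graph (T : finType) (E A : rel T) : Prop :=
  [/\ forall u v, E u v = E v u,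
      forall u, ~~ E u u,
      forall u, ~~ A u u,
      forall u v, A u v -> ~~ E u v
    & forall u v, A u v -> ~~ A v u].

Definition mstep (T : finType) (E A : rel T) : rel T :=
  fun u v => E u v || A u v.

(* In a simple mixed graph there are no cycles of length 1 or 2
   (they would need a loop, or two distinct connections between the same
   pair of vertices); for length >= 3 and distinct vertices, no edge/arc
   is repeated. *)
Definition is_cycle (T : finType) (E A : rel T) (s : seq T) : bool :=
  [&& 3 <= size s, uniq s & cycle (mstep E A) s].

Definition girth_is (T : finType) (E A : rel T) (g : nat) : Prop :=
  (exists s, is_cycle E A s /\ size s = g) /\
  (forall s, is_cycle E A s -> g <= size s).

Definition mixed_graph_zrg (T : finType) (E A : rel T) (z r g : nat) : Prop :=
  [/\ simple_mixed_graph E A,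
      forall u, #|[set v | A u v]| = z,
      forall u, #|[set v | A v u]| = z,
      forall u, #|[set v | E u v]| = r
    & girth_is E A g].

Definition has_mixed_graph (z r g n : nat) : Prop :=
  exists E A : rel 'I_n, mixed_graph_zrg E A z r g.

Definition is_mixed_cage_order (z r g n : nat) : Prop :=
  has_mixed_graph z r g n /\ forall m, has_mixed_graph z r g m -> n <= m.

(* Main.v *)
Require Import Defs.
From mathcomp Require Import all_boot.
From Stdlib Require Import Classical.
Set Implicit Arguments.


Definition adjl (i : nat) : seq nat := nth [::] [:: [:: 7; 11; 13]; [:: 7; 8; 12]; [:: 8; 9; 13]; [:: 7; 9; 10]; [:: 8; 10; 11]; [:: 9; 11; 12]; [:: 10; 12; 13]; [:: 0; 1; 3]; [:: 1; 2; 4]; [:: 2; 3; 5]; [:: 3; 4; 6]; [:: 0; 4; 5]; [:: 1; 5; 6]; [:: 0; 2; 6]; [:: 21; 25; 27]; [:: 21; 22; 26]; [:: 22; 23; 27]; [:: 21; 23; 24]; [:: 22; 24; 25]; [:: 23; 25; 26]; [:: 24; 26; 27]; [:: 14; 15; 17]; [:: 15; 16; 18]; [:: 16; 17; 19]; [:: 17; 18; 20]; [:: 14; 18; 19]; [:: 15; 19; 20]; [:: 14; 16; 20]] i.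
Definition arcl (i : nat) : nat := nth 0 [:: 24; 26; 22; 25; 23; 27; 21; 14; 19; 16; 18; 20; 15; 17; 4; 3; 0; 1; 5; 6; 2; 9; 7; 12; 8; 11; 10; 13] i.
Definition E28 : rel 'I_28 := fun u v => (v : nat) \in adjl u.
Definition A28 : rel 'I_28 := fun u v => (v : nat) == arcl u.
Definition stepl (i : nat) : seq nat := arcl i :: adjl i.
Definition arcinv (i : nat) : nat := index i (map arcl (iota 0 28)).
Definition r28 := iota 0 28.

Definition chk_basic : bool :=
  all (fun i => all (fun j => (j \in adjl i) == (i \in adjl j)) r28) r28 &&
  all (fun i => [&& i \notin adjl i, arcl i != i, arcl i \notin adjl i,
                   arcl (arcl i) != i & arcl i < 28] && [&& uniq (adjl i),
                   all (fun j => j < 28) (adjl i), size (adjl i) == 3,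
                   arcinv i < 28 &
                   all (fun j => (arcl j == i) == (j == arcinv i)) r28]) r28.
Definition chk_cyc : bool :=
  all (fun a => all (fun b => all (fun c =>
     ~~ ((a \in stepl c) && uniq [:: a; b; c]) &&
     all (fun d => ~~ ((a \in stepl d) && uniq [:: a; b; c; d])) (stepl c))
     (stepl b)) (stepl a)) r28.

Lemma chk_basic_ok : chk_basic. Proof. by vm_compute. Qed.
Lemma chk_cyc_ok : chk_cyc. Proof. by vm_compute. Qed.

Lemma in_r28 (u : 'I_28) : (u : nat) \in r28.
Proof. by rewrite mem_iota /= add0n ltn_ord. Qed.

Lemma basic (u : nat) : u < 28 ->
  [/\ u \notin adjl u, arcl u != u, arcl u \notin adjl u,
                   arcl (arcl u) != u & arcl u < 28] /\ [/\ uniq (adjl u),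
                   all (fun j => j < 28) (adjl u), size (adjl u) == 3,
                   arcinv u < 28 &
                   all (fun j => (arcl j == u) == (j == arcinv u)) r28].
Proof.
move=> hu; move: chk_basic_ok => /andP [_ /allP /(_ u)].
by rewrite mem_iota /= add0n hu => /(_ isT) /andP [/and5P ? /and5P ?].
Qed.

Lemma card_seq_set n (s : seq nat) : uniq s -> all (fun j => j < n) s ->
  #|[set v : 'I_n | (v : nat) \in s]| = size s.
Proof.
move=> us al.
have -> : [set v : 'I_n | (v : nat) \in s] = [set v in pmap insub s].
  by apply/setP => v; rewrite !inE mem_pmap_sub.
rewrite cardsE; move/card_uniqP: (pmap_sub_uniq 'I_n us) => ->.
by rewrite size_pmap_sub; apply/eqP; rewrite -all_count.
Qed.

Lemma mstep_in (u v : 'I_28) : mstep E28 A28 u v -> (v : nat) \in stepl u.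
Proof. by rewrite /mstep /E28 /A28 /stepl inE orbC => /orP [->|->]; rewrite ?orbT. Qed.

Lemma upper : has_mixed_graph 1 3 5 28.
Proof.
exists E28, A28; split.
- split.
  + move=> u v; rewrite /E28.
    move: chk_basic_ok => /andP [/allP /(_ _ (in_r28 u)) /allP /(_ _ (in_r28 v)) /eqP -> _] //.
  + by move=> u; rewrite /E28; case: (@basic _ (ltn_ord u)) => [[]].
  + by move=> u; rewrite /A28 eq_sym; case: (@basic _ (ltn_ord u)) => [[]].
  + by move=> u v; rewrite /A28 /E28 => /eqP ->; case: (@basic _ (ltn_ord u)) => [[]].
  + move=> u v; rewrite /A28 => /eqP h; apply/negP => /eqP h2.
    by case: (@basic _ (ltn_ord u)) => [[_ _ _ /eqP]]; rewrite -h -h2.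
- move=> u; case: (@basic _ (ltn_ord u)) => [[_ _ _ _ hlt] _].
  apply/eqP/cards1P; exists (Ordinal hlt); apply/setP => v; rewrite !inE /A28.
  by rewrite -val_eqE.
- move=> u; case: (@basic _ (ltn_ord u)) => [_ [_ _ _ hlt /allP hall]].
  apply/eqP/cards1P; exists (Ordinal hlt); apply/setP => v; rewrite !inE /A28.
  by rewrite -val_eqE /= eq_sym (eqP (hall _ (in_r28 v))).
- move=> u; case: (@basic _ (ltn_ord u)) => [_ [us al /eqP sz _ _]].
  by rewrite /E28 card_seq_set.
- split.
  + exists [:: inord 0; inord 24; inord 8; inord 1; inord 7]; split => //.
    by rewrite /is_cycle /= /mstep /E28 /A28 !inE -!val_eqE /= !inordK.
  + move=> s; rewrite /is_cycle => /and3P [h3 hu hc].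
    rewrite leqNgt; apply/negP => h5.
    case: s h3 hu hc h5 => [|a [|b [|c [|d [|e s]]]]] //= _.
    * move=> hu hc _; move: hu hc; rewrite !inE !negb_or.
      case/and3P => /andP [ab ac] bc _; case/and4P => mab mbc mca _.
      move: chk_cyc_ok => /allP /(_ _ (in_r28 a)) /allP /(_ _ (@mstep_in _ _ mab))
         /allP /(_ _ (@mstep_in _ _ mbc)) /andP [/negP H _]; apply: H.
      by rewrite (@mstep_in _ _ mca) /= !inE !negb_or !val_eqE ab ac bc.
    * move=> hu hc _; move: hu hc; rewrite !inE !negb_or.
      case/and4P => /andP [ab /andP [ac ad]] /andP [bc bd] cd _.
      case/and5P => mab mbc mcd mda _.
      move: chk_cyc_ok => /allP /(_ _ (in_r28 a)) /allP /(_ _ (@mstep_in _ _ mab))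
         /allP /(_ _ (@mstep_in _ _ mbc)) /andP [_ /allP /(_ _ (@mstep_in _ _ mcd)) /negP H]; apply: H.
      by rewrite (@mstep_in _ _ mda) /= !inE !negb_or !val_eqE ab ac ad bc bd cd.
Qed.

Lemma pick1 (T : finType) (S : {set T}) : #|S| = 1 -> exists x, x \in S.
Proof. by move/eqP/cards1P => [x ->]; exists x; rewrite inE. Qed.

Lemma pick2 (T : finType) (S : {set T}) : #|S| = 2 ->
  exists x y, [/\ x \in S, y \in S & x != y].
Proof. move/eqP/cards2P => [x [y [xy ->]]]; exists x, y; split => //; by rewrite !inE eqxx ?orbT. Qed.

Lemma pick3 (T : finType) (S : {set T}) : #|S| = 3 ->
  exists x y z, [/\ x \in S, y \in S & z \in S] /\ [/\ x != y, x != z & y != z].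
Proof.
move=> h; have /set0Pn [x xS] : S != set0 by rewrite -card_gt0 h.
have := cardsD1 x S; rewrite xS h add1n => [[/esym h2]].
have [y [z [yS zS yz]]] := pick2 h2.
move: yS zS; rewrite !inE => /andP [yx yS] /andP [zx zS].
by exists x, y, z; split; split => //; rewrite eq_sym.
Qed.

Lemma nsym {T : eqType} {a b : T} : a != b -> b != a.
Proof. by rewrite eq_sym. Qed.

Ltac solve_false :=
  first [ match goal with H : is_true (?x != ?x) |- _ => by rewrite eqxx in H end
        | by eauto ].
Ltac solve_ne := apply/eqP => Heq; subst; solve_false.
Ltac both H := let H' := fresh "Hs" in have H' := H; rewrite eq_sym in H'.

Lemma lower n (E A : rel 'I_n) : mixed_graph_zrg E A 1 3 5 -> 20 <= n.
Proof.
move=> [[Esym Eirr Airr AE Aasym] Aout Ain Edeg [[s0 [cs0 _]] girth]].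
have [v _] : exists v : 'I_n, true.
  by case: s0 cs0 => [|v0 ?] //= _; exists v0.
have mE : forall u w, E u w -> mstep E A u w by move=> u w h; rewrite /mstep h.
have mE' : forall u w, E u w -> mstep E A w u by move=> u w h; rewrite /mstep Esym h.
have mA : forall u w, A u w -> mstep E A u w by move=> u w h; rewrite /mstep h orbT.
have mne : forall u w, mstep E A u w -> u != w.
  move=> u w; apply: contraTneq => ->.
  by rewrite /mstep (negbTE (Eirr w)) (negbTE (Airr w)).
have L3 : forall a b c, mstep E A a b -> mstep E A b c -> mstep E A c a -> False.
  move=> a b c h1 h2 h3; suff : 5 <= 3 by [].
  have n1 := mne _ _ h1; have n2 := mne _ _ h2; have n3 := mne _ _ h3.
  rewrite eq_sym in n3.
  apply: (girth [:: a; b; c]).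
  by rewrite /is_cycle /= !inE !negb_or n1 n2 n3 h1 h2 h3.
have L4 : forall a b c d, mstep E A a b -> mstep E A b c -> mstep E A c d ->
    mstep E A d a -> a != c -> b != d -> False.
  move=> a b c d h1 h2 h3 h4 n13 n24; suff : 5 <= 4 by [].
  have n1 := mne _ _ h1; have n2 := mne _ _ h2; have n3 := mne _ _ h3;
  have n4 := mne _ _ h4.
  rewrite eq_sym in n4.
  apply: (girth [:: a; b; c; d]).
  by rewrite /is_cycle /= !inE !negb_or n1 n2 n3 n4 n13 n24 h1 h2 h3 h4.
have F1 : forall u, E u u -> False by move=> u; rewrite (negbTE (Eirr u)).
have F2 : forall u, A u u -> False by move=> u; rewrite (negbTE (Airr u)).
have F3 : forall u w, A u w -> E u w -> False.
  by move=> u w h; rewrite (negbTE (AE _ _ h)).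
have F4 : forall u w, A u w -> E w u -> False.
  by move=> u w h; rewrite Esym (negbTE (AE _ _ h)).
have F5 : forall u w, A u w -> A w u -> False.
  by move=> u w h; rewrite (negbTE (Aasym _ _ h)).
have [w Hw] := pick1 (Aout v); rewrite inE in Hw.
have [x Hx] := pick1 (Ain v); rewrite inE in Hx.
have [p Hp] := pick1 (Aout w); rewrite inE in Hp.
have [q Hq] := pick1 (Ain x); rewrite inE in Hq.
have [a1 [a2 [a3 [[Ha1 Ha2 Ha3] [n12 n13 n23]]]]] := pick3 (Edeg v).
rewrite !inE in Ha1 Ha2 Ha3.
have [f1 [f2 [f3 [[Hf1 Hf2 Hf3] [nf12 nf13 nf23]]]]] := pick3 (Edeg w).
rewrite !inE in Hf1 Hf2 Hf3.
have [k1 [k2 [k3 [[Hk1 Hk2 Hk3] [nk12 nk13 nk23]]]]] := pick3 (Edeg x).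
rewrite !inE in Hk1 Hk2 Hk3.
have c2 : forall a, E v a -> #|[set y | E a y] :\ v| = 2.
  move=> a Ha; move/eqP: (cardsD1 v [set y | E a y]).
  by rewrite Edeg inE Esym Ha add1n eqSS => /eqP <-.
have [b11 [b12 [Hb11 Hb12 nb1]]] := pick2 (c2 _ Ha1).
have [b21 [b22 [Hb21 Hb22 nb2]]] := pick2 (c2 _ Ha2).
have [b31 [b32 [Hb31 Hb32 nb3]]] := pick2 (c2 _ Ha3).
rewrite !inE in Hb11 Hb12 Hb21 Hb22 Hb31 Hb32.
case/andP: Hb11 => vb11 Hb11; case/andP: Hb12 => vb12 Hb12.
case/andP: Hb21 => vb21 Hb21; case/andP: Hb22 => vb22 Hb22.
case/andP: Hb31 => vb31 Hb31; case/andP: Hb32 => vb32 Hb32.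
have N_v_a1 : v != a1 by apply/eqP => Heq; subst a1; exact: (F1 _ Ha1).
have N_v_a2 : v != a2 by apply/eqP => Heq; subst a2; exact: (F1 _ Ha2).
have N_v_a3 : v != a3 by apply/eqP => Heq; subst a3; exact: (F1 _ Ha3).
have N_v_w : v != w by apply/eqP => Heq; subst w; exact: (F2 _ Hw).
have N_v_x : v != x by apply/eqP => Heq; subst x; exact: (F2 _ Hx).
have N_v_b11 : v != b11 by exact: nsym vb11.
have N_v_b12 : v != b12 by exact: nsym vb12.
have N_v_b21 : v != b21 by exact: nsym vb21.
have N_v_b22 : v != b22 by exact: nsym vb22.
have N_v_b31 : v != b31 by exact: nsym vb31.
have N_v_b32 : v != b32 by exact: nsym vb32.
have N_v_f1 : v != f1 by apply/eqP => Heq; subst f1; exact: (F4 _ _ Hw Hf1).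
have N_v_f2 : v != f2 by apply/eqP => Heq; subst f2; exact: (F4 _ _ Hw Hf2).
have N_v_f3 : v != f3 by apply/eqP => Heq; subst f3; exact: (F4 _ _ Hw Hf3).
have N_v_p : v != p by apply/eqP => Heq; subst p; exact: (F5 _ _ Hw Hp).
have N_v_k1 : v != k1 by apply/eqP => Heq; subst k1; exact: (F3 _ _ Hx Hk1).
have N_v_k2 : v != k2 by apply/eqP => Heq; subst k2; exact: (F3 _ _ Hx Hk2).
have N_v_k3 : v != k3 by apply/eqP => Heq; subst k3; exact: (F3 _ _ Hx Hk3).
have N_v_q : v != q by apply/eqP => Heq; subst q; exact: (F5 _ _ Hx Hq).
have N_a1_w : a1 != w by apply/eqP => Heq; subst w; exact: (F3 _ _ Hw Ha1).
have N_a1_x : a1 != x by apply/eqP => Heq; subst x; exact: (F4 _ _ Hx Ha1).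
have N_a1_b11 : a1 != b11 by apply/eqP => Heq; subst b11; exact: (F1 _ Hb11).
have N_a1_b12 : a1 != b12 by apply/eqP => Heq; subst b12; exact: (F1 _ Hb12).
have N_a1_b21 : a1 != b21 by apply/eqP => Heq; subst b21; exact: (L3 _ _ _ (mE _ _ Ha1) (mE' _ _ Hb21) (mE' _ _ Ha2)).
have N_a1_b22 : a1 != b22 by apply/eqP => Heq; subst b22; exact: (L3 _ _ _ (mE _ _ Ha1) (mE' _ _ Hb22) (mE' _ _ Ha2)).
have N_a1_b31 : a1 != b31 by apply/eqP => Heq; subst b31; exact: (L3 _ _ _ (mE _ _ Ha1) (mE' _ _ Hb31) (mE' _ _ Ha3)).
have N_a1_b32 : a1 != b32 by apply/eqP => Heq; subst b32; exact: (L3 _ _ _ (mE _ _ Ha1) (mE' _ _ Hb32) (mE' _ _ Ha3)).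
have N_a1_f1 : a1 != f1 by apply/eqP => Heq; subst f1; exact: (L3 _ _ _ (mE' _ _ Ha1) (mA _ _ Hw) (mE _ _ Hf1)).
have N_a1_f2 : a1 != f2 by apply/eqP => Heq; subst f2; exact: (L3 _ _ _ (mE' _ _ Ha1) (mA _ _ Hw) (mE _ _ Hf2)).
have N_a1_f3 : a1 != f3 by apply/eqP => Heq; subst f3; exact: (L3 _ _ _ (mE' _ _ Ha1) (mA _ _ Hw) (mE _ _ Hf3)).
have N_a1_p : a1 != p by apply/eqP => Heq; subst p; exact: (L3 _ _ _ (mE' _ _ Ha1) (mA _ _ Hw) (mA _ _ Hp)).
have N_a1_k1 : a1 != k1 by apply/eqP => Heq; subst k1; exact: (L3 _ _ _ (mE _ _ Ha1) (mE' _ _ Hk1) (mA _ _ Hx)).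
have N_a1_k2 : a1 != k2 by apply/eqP => Heq; subst k2; exact: (L3 _ _ _ (mE _ _ Ha1) (mE' _ _ Hk2) (mA _ _ Hx)).
have N_a1_k3 : a1 != k3 by apply/eqP => Heq; subst k3; exact: (L3 _ _ _ (mE _ _ Ha1) (mE' _ _ Hk3) (mA _ _ Hx)).
have N_a1_q : a1 != q by apply/eqP => Heq; subst q; exact: (L3 _ _ _ (mE _ _ Ha1) (mA _ _ Hq) (mA _ _ Hx)).
have N_a2_w : a2 != w by apply/eqP => Heq; subst w; exact: (F3 _ _ Hw Ha2).
have N_a2_x : a2 != x by apply/eqP => Heq; subst x; exact: (F4 _ _ Hx Ha2).
have N_a2_b11 : a2 != b11 by apply/eqP => Heq; subst b11; exact: (L3 _ _ _ (mE _ _ Ha1) (mE _ _ Hb11) (mE' _ _ Ha2)).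
have N_a2_b12 : a2 != b12 by apply/eqP => Heq; subst b12; exact: (L3 _ _ _ (mE _ _ Ha1) (mE _ _ Hb12) (mE' _ _ Ha2)).
have N_a2_b21 : a2 != b21 by apply/eqP => Heq; subst b21; exact: (F1 _ Hb21).
have N_a2_b22 : a2 != b22 by apply/eqP => Heq; subst b22; exact: (F1 _ Hb22).
have N_a2_b31 : a2 != b31 by apply/eqP => Heq; subst b31; exact: (L3 _ _ _ (mE _ _ Ha2) (mE' _ _ Hb31) (mE' _ _ Ha3)).
have N_a2_b32 : a2 != b32 by apply/eqP => Heq; subst b32; exact: (L3 _ _ _ (mE _ _ Ha2) (mE' _ _ Hb32) (mE' _ _ Ha3)).
have N_a2_f1 : a2 != f1 by apply/eqP => Heq; subst f1; exact: (L3 _ _ _ (mE' _ _ Ha2) (mA _ _ Hw) (mE _ _ Hf1)).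
have N_a2_f2 : a2 != f2 by apply/eqP => Heq; subst f2; exact: (L3 _ _ _ (mE' _ _ Ha2) (mA _ _ Hw) (mE _ _ Hf2)).
have N_a2_f3 : a2 != f3 by apply/eqP => Heq; subst f3; exact: (L3 _ _ _ (mE' _ _ Ha2) (mA _ _ Hw) (mE _ _ Hf3)).
have N_a2_p : a2 != p by apply/eqP => Heq; subst p; exact: (L3 _ _ _ (mE' _ _ Ha2) (mA _ _ Hw) (mA _ _ Hp)).
have N_a2_k1 : a2 != k1 by apply/eqP => Heq; subst k1; exact: (L3 _ _ _ (mE _ _ Ha2) (mE' _ _ Hk1) (mA _ _ Hx)).
have N_a2_k2 : a2 != k2 by apply/eqP => Heq; subst k2; exact: (L3 _ _ _ (mE _ _ Ha2) (mE' _ _ Hk2) (mA _ _ Hx)).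
have N_a2_k3 : a2 != k3 by apply/eqP => Heq; subst k3; exact: (L3 _ _ _ (mE _ _ Ha2) (mE' _ _ Hk3) (mA _ _ Hx)).
have N_a2_q : a2 != q by apply/eqP => Heq; subst q; exact: (L3 _ _ _ (mE _ _ Ha2) (mA _ _ Hq) (mA _ _ Hx)).
have N_a3_w : a3 != w by apply/eqP => Heq; subst w; exact: (F3 _ _ Hw Ha3).
have N_a3_x : a3 != x by apply/eqP => Heq; subst x; exact: (F4 _ _ Hx Ha3).
have N_a3_b11 : a3 != b11 by apply/eqP => Heq; subst b11; exact: (L3 _ _ _ (mE _ _ Ha1) (mE _ _ Hb11) (mE' _ _ Ha3)).
have N_a3_b12 : a3 != b12 by apply/eqP => Heq; subst b12; exact: (L3 _ _ _ (mE _ _ Ha1) (mE _ _ Hb12) (mE' _ _ Ha3)).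
have N_a3_b21 : a3 != b21 by apply/eqP => Heq; subst b21; exact: (L3 _ _ _ (mE _ _ Ha2) (mE _ _ Hb21) (mE' _ _ Ha3)).
have N_a3_b22 : a3 != b22 by apply/eqP => Heq; subst b22; exact: (L3 _ _ _ (mE _ _ Ha2) (mE _ _ Hb22) (mE' _ _ Ha3)).
have N_a3_b31 : a3 != b31 by apply/eqP => Heq; subst b31; exact: (F1 _ Hb31).
have N_a3_b32 : a3 != b32 by apply/eqP => Heq; subst b32; exact: (F1 _ Hb32).
have N_a3_f1 : a3 != f1 by apply/eqP => Heq; subst f1; exact: (L3 _ _ _ (mE' _ _ Ha3) (mA _ _ Hw) (mE _ _ Hf1)).
have N_a3_f2 : a3 != f2 by apply/eqP => Heq; subst f2; exact: (L3 _ _ _ (mE' _ _ Ha3) (mA _ _ Hw) (mE _ _ Hf2)).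
have N_a3_f3 : a3 != f3 by apply/eqP => Heq; subst f3; exact: (L3 _ _ _ (mE' _ _ Ha3) (mA _ _ Hw) (mE _ _ Hf3)).
have N_a3_p : a3 != p by apply/eqP => Heq; subst p; exact: (L3 _ _ _ (mE' _ _ Ha3) (mA _ _ Hw) (mA _ _ Hp)).
have N_a3_k1 : a3 != k1 by apply/eqP => Heq; subst k1; exact: (L3 _ _ _ (mE _ _ Ha3) (mE' _ _ Hk1) (mA _ _ Hx)).
have N_a3_k2 : a3 != k2 by apply/eqP => Heq; subst k2; exact: (L3 _ _ _ (mE _ _ Ha3) (mE' _ _ Hk2) (mA _ _ Hx)).
have N_a3_k3 : a3 != k3 by apply/eqP => Heq; subst k3; exact: (L3 _ _ _ (mE _ _ Ha3) (mE' _ _ Hk3) (mA _ _ Hx)).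
have N_a3_q : a3 != q by apply/eqP => Heq; subst q; exact: (L3 _ _ _ (mE _ _ Ha3) (mA _ _ Hq) (mA _ _ Hx)).
have N_w_x : w != x by apply/eqP => Heq; subst x; exact: (F5 _ _ Hw Hx).
have N_w_b11 : w != b11 by apply/eqP => Heq; subst b11; exact: (L3 _ _ _ (mE' _ _ Ha1) (mA _ _ Hw) (mE' _ _ Hb11)).
have N_w_b12 : w != b12 by apply/eqP => Heq; subst b12; exact: (L3 _ _ _ (mE' _ _ Ha1) (mA _ _ Hw) (mE' _ _ Hb12)).
have N_w_b21 : w != b21 by apply/eqP => Heq; subst b21; exact: (L3 _ _ _ (mE' _ _ Ha2) (mA _ _ Hw) (mE' _ _ Hb21)).
have N_w_b22 : w != b22 by apply/eqP => Heq; subst b22; exact: (L3 _ _ _ (mE' _ _ Ha2) (mA _ _ Hw) (mE' _ _ Hb22)).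
have N_w_b31 : w != b31 by apply/eqP => Heq; subst b31; exact: (L3 _ _ _ (mE' _ _ Ha3) (mA _ _ Hw) (mE' _ _ Hb31)).
have N_w_b32 : w != b32 by apply/eqP => Heq; subst b32; exact: (L3 _ _ _ (mE' _ _ Ha3) (mA _ _ Hw) (mE' _ _ Hb32)).
have N_w_f1 : w != f1 by apply/eqP => Heq; subst f1; exact: (F1 _ Hf1).
have N_w_f2 : w != f2 by apply/eqP => Heq; subst f2; exact: (F1 _ Hf2).
have N_w_f3 : w != f3 by apply/eqP => Heq; subst f3; exact: (F1 _ Hf3).
have N_w_p : w != p by apply/eqP => Heq; subst p; exact: (F2 _ Hp).
have N_w_k1 : w != k1 by apply/eqP => Heq; subst k1; exact: (L3 _ _ _ (mE' _ _ Hk1) (mA _ _ Hx) (mA _ _ Hw)).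
have N_w_k2 : w != k2 by apply/eqP => Heq; subst k2; exact: (L3 _ _ _ (mE' _ _ Hk2) (mA _ _ Hx) (mA _ _ Hw)).
have N_w_k3 : w != k3 by apply/eqP => Heq; subst k3; exact: (L3 _ _ _ (mE' _ _ Hk3) (mA _ _ Hx) (mA _ _ Hw)).
have N_w_q : w != q by apply/eqP => Heq; subst q; exact: (L3 _ _ _ (mA _ _ Hw) (mA _ _ Hq) (mA _ _ Hx)).
have N_x_b11 : x != b11 by apply/eqP => Heq; subst b11; exact: (L3 _ _ _ (mE _ _ Ha1) (mE _ _ Hb11) (mA _ _ Hx)).
have N_x_b12 : x != b12 by apply/eqP => Heq; subst b12; exact: (L3 _ _ _ (mE _ _ Ha1) (mE _ _ Hb12) (mA _ _ Hx)).
have N_x_b21 : x != b21 by apply/eqP => Heq; subst b21; exact: (L3 _ _ _ (mE _ _ Ha2) (mE _ _ Hb21) (mA _ _ Hx)).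
have N_x_b22 : x != b22 by apply/eqP => Heq; subst b22; exact: (L3 _ _ _ (mE _ _ Ha2) (mE _ _ Hb22) (mA _ _ Hx)).
have N_x_b31 : x != b31 by apply/eqP => Heq; subst b31; exact: (L3 _ _ _ (mE _ _ Ha3) (mE _ _ Hb31) (mA _ _ Hx)).
have N_x_b32 : x != b32 by apply/eqP => Heq; subst b32; exact: (L3 _ _ _ (mE _ _ Ha3) (mE _ _ Hb32) (mA _ _ Hx)).
have N_x_f1 : x != f1 by apply/eqP => Heq; subst f1; exact: (L3 _ _ _ (mE _ _ Hf1) (mA _ _ Hx) (mA _ _ Hw)).
have N_x_f2 : x != f2 by apply/eqP => Heq; subst f2; exact: (L3 _ _ _ (mE _ _ Hf2) (mA _ _ Hx) (mA _ _ Hw)).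
have N_x_f3 : x != f3 by apply/eqP => Heq; subst f3; exact: (L3 _ _ _ (mE _ _ Hf3) (mA _ _ Hx) (mA _ _ Hw)).
have N_x_p : x != p by apply/eqP => Heq; subst p; exact: (L3 _ _ _ (mA _ _ Hw) (mA _ _ Hp) (mA _ _ Hx)).
have N_x_k1 : x != k1 by apply/eqP => Heq; subst k1; exact: (F1 _ Hk1).
have N_x_k2 : x != k2 by apply/eqP => Heq; subst k2; exact: (F1 _ Hk2).
have N_x_k3 : x != k3 by apply/eqP => Heq; subst k3; exact: (F1 _ Hk3).
have N_x_q : x != q by apply/eqP => Heq; subst q; exact: (F2 _ Hq).
have N_b11_b21 : b11 != b21 by apply/eqP => Heq; subst b21; exact: (L4 _ _ _ _ (mE _ _ Ha1) (mE _ _ Hb11) (mE' _ _ Hb21) (mE' _ _ Ha2) (nsym vb11) n12).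
have N_b11_b22 : b11 != b22 by apply/eqP => Heq; subst b22; exact: (L4 _ _ _ _ (mE _ _ Ha1) (mE _ _ Hb11) (mE' _ _ Hb22) (mE' _ _ Ha2) (nsym vb11) n12).
have N_b11_b31 : b11 != b31 by apply/eqP => Heq; subst b31; exact: (L4 _ _ _ _ (mE _ _ Ha1) (mE _ _ Hb11) (mE' _ _ Hb31) (mE' _ _ Ha3) (nsym vb11) n13).
have N_b11_b32 : b11 != b32 by apply/eqP => Heq; subst b32; exact: (L4 _ _ _ _ (mE _ _ Ha1) (mE _ _ Hb11) (mE' _ _ Hb32) (mE' _ _ Ha3) (nsym vb11) n13).
have N_b11_f1 : b11 != f1 by apply/eqP => Heq; subst f1; exact: (L4 _ _ _ _ (mE' _ _ Ha1) (mA _ _ Hw) (mE _ _ Hf1) (mE' _ _ Hb11) N_a1_w (nsym vb11)).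
have N_b11_f2 : b11 != f2 by apply/eqP => Heq; subst f2; exact: (L4 _ _ _ _ (mE' _ _ Ha1) (mA _ _ Hw) (mE _ _ Hf2) (mE' _ _ Hb11) N_a1_w (nsym vb11)).
have N_b11_f3 : b11 != f3 by apply/eqP => Heq; subst f3; exact: (L4 _ _ _ _ (mE' _ _ Ha1) (mA _ _ Hw) (mE _ _ Hf3) (mE' _ _ Hb11) N_a1_w (nsym vb11)).
have N_b11_p : b11 != p by apply/eqP => Heq; subst p; exact: (L4 _ _ _ _ (mE' _ _ Ha1) (mA _ _ Hw) (mA _ _ Hp) (mE' _ _ Hb11) N_a1_w (nsym vb11)).
have N_b11_k1 : b11 != k1 by apply/eqP => Heq; subst k1; exact: (L4 _ _ _ _ (mE _ _ Ha1) (mE _ _ Hb11) (mE' _ _ Hk1) (mA _ _ Hx) (nsym vb11) N_a1_x).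
have N_b11_k2 : b11 != k2 by apply/eqP => Heq; subst k2; exact: (L4 _ _ _ _ (mE _ _ Ha1) (mE _ _ Hb11) (mE' _ _ Hk2) (mA _ _ Hx) (nsym vb11) N_a1_x).
have N_b11_k3 : b11 != k3 by apply/eqP => Heq; subst k3; exact: (L4 _ _ _ _ (mE _ _ Ha1) (mE _ _ Hb11) (mE' _ _ Hk3) (mA _ _ Hx) (nsym vb11) N_a1_x).
have N_b11_q : b11 != q by apply/eqP => Heq; subst q; exact: (L4 _ _ _ _ (mE _ _ Ha1) (mE _ _ Hb11) (mA _ _ Hq) (mA _ _ Hx) (nsym vb11) N_a1_x).
have N_b12_b21 : b12 != b21 by apply/eqP => Heq; subst b21; exact: (L4 _ _ _ _ (mE _ _ Ha1) (mE _ _ Hb12) (mE' _ _ Hb21) (mE' _ _ Ha2) (nsym vb12) n12).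
have N_b12_b22 : b12 != b22 by apply/eqP => Heq; subst b22; exact: (L4 _ _ _ _ (mE _ _ Ha1) (mE _ _ Hb12) (mE' _ _ Hb22) (mE' _ _ Ha2) (nsym vb12) n12).
have N_b12_b31 : b12 != b31 by apply/eqP => Heq; subst b31; exact: (L4 _ _ _ _ (mE _ _ Ha1) (mE _ _ Hb12) (mE' _ _ Hb31) (mE' _ _ Ha3) (nsym vb12) n13).
have N_b12_b32 : b12 != b32 by apply/eqP => Heq; subst b32; exact: (L4 _ _ _ _ (mE _ _ Ha1) (mE _ _ Hb12) (mE' _ _ Hb32) (mE' _ _ Ha3) (nsym vb12) n13).
have N_b12_f1 : b12 != f1 by apply/eqP => Heq; subst f1; exact: (L4 _ _ _ _ (mE' _ _ Ha1) (mA _ _ Hw) (mE _ _ Hf1) (mE' _ _ Hb12) N_a1_w (nsym vb12)).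
have N_b12_f2 : b12 != f2 by apply/eqP => Heq; subst f2; exact: (L4 _ _ _ _ (mE' _ _ Ha1) (mA _ _ Hw) (mE _ _ Hf2) (mE' _ _ Hb12) N_a1_w (nsym vb12)).
have N_b12_f3 : b12 != f3 by apply/eqP => Heq; subst f3; exact: (L4 _ _ _ _ (mE' _ _ Ha1) (mA _ _ Hw) (mE _ _ Hf3) (mE' _ _ Hb12) N_a1_w (nsym vb12)).
have N_b12_p : b12 != p by apply/eqP => Heq; subst p; exact: (L4 _ _ _ _ (mE' _ _ Ha1) (mA _ _ Hw) (mA _ _ Hp) (mE' _ _ Hb12) N_a1_w (nsym vb12)).
have N_b12_k1 : b12 != k1 by apply/eqP => Heq; subst k1; exact: (L4 _ _ _ _ (mE _ _ Ha1) (mE _ _ Hb12) (mE' _ _ Hk1) (mA _ _ Hx) (nsym vb12) N_a1_x).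
have N_b12_k2 : b12 != k2 by apply/eqP => Heq; subst k2; exact: (L4 _ _ _ _ (mE _ _ Ha1) (mE _ _ Hb12) (mE' _ _ Hk2) (mA _ _ Hx) (nsym vb12) N_a1_x).
have N_b12_k3 : b12 != k3 by apply/eqP => Heq; subst k3; exact: (L4 _ _ _ _ (mE _ _ Ha1) (mE _ _ Hb12) (mE' _ _ Hk3) (mA _ _ Hx) (nsym vb12) N_a1_x).
have N_b12_q : b12 != q by apply/eqP => Heq; subst q; exact: (L4 _ _ _ _ (mE _ _ Ha1) (mE _ _ Hb12) (mA _ _ Hq) (mA _ _ Hx) (nsym vb12) N_a1_x).
have N_b21_b31 : b21 != b31 by apply/eqP => Heq; subst b31; exact: (L4 _ _ _ _ (mE _ _ Ha2) (mE _ _ Hb21) (mE' _ _ Hb31) (mE' _ _ Ha3) (nsym vb21) n23).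
have N_b21_b32 : b21 != b32 by apply/eqP => Heq; subst b32; exact: (L4 _ _ _ _ (mE _ _ Ha2) (mE _ _ Hb21) (mE' _ _ Hb32) (mE' _ _ Ha3) (nsym vb21) n23).
have N_b21_f1 : b21 != f1 by apply/eqP => Heq; subst f1; exact: (L4 _ _ _ _ (mE' _ _ Ha2) (mA _ _ Hw) (mE _ _ Hf1) (mE' _ _ Hb21) N_a2_w (nsym vb21)).
have N_b21_f2 : b21 != f2 by apply/eqP => Heq; subst f2; exact: (L4 _ _ _ _ (mE' _ _ Ha2) (mA _ _ Hw) (mE _ _ Hf2) (mE' _ _ Hb21) N_a2_w (nsym vb21)).
have N_b21_f3 : b21 != f3 by apply/eqP => Heq; subst f3; exact: (L4 _ _ _ _ (mE' _ _ Ha2) (mA _ _ Hw) (mE _ _ Hf3) (mE' _ _ Hb21) N_a2_w (nsym vb21)).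
have N_b21_p : b21 != p by apply/eqP => Heq; subst p; exact: (L4 _ _ _ _ (mE' _ _ Ha2) (mA _ _ Hw) (mA _ _ Hp) (mE' _ _ Hb21) N_a2_w (nsym vb21)).
have N_b21_k1 : b21 != k1 by apply/eqP => Heq; subst k1; exact: (L4 _ _ _ _ (mE _ _ Ha2) (mE _ _ Hb21) (mE' _ _ Hk1) (mA _ _ Hx) (nsym vb21) N_a2_x).
have N_b21_k2 : b21 != k2 by apply/eqP => Heq; subst k2; exact: (L4 _ _ _ _ (mE _ _ Ha2) (mE _ _ Hb21) (mE' _ _ Hk2) (mA _ _ Hx) (nsym vb21) N_a2_x).
have N_b21_k3 : b21 != k3 by apply/eqP => Heq; subst k3; exact: (L4 _ _ _ _ (mE _ _ Ha2) (mE _ _ Hb21) (mE' _ _ Hk3) (mA _ _ Hx) (nsym vb21) N_a2_x).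
have N_b21_q : b21 != q by apply/eqP => Heq; subst q; exact: (L4 _ _ _ _ (mE _ _ Ha2) (mE _ _ Hb21) (mA _ _ Hq) (mA _ _ Hx) (nsym vb21) N_a2_x).
have N_b22_b31 : b22 != b31 by apply/eqP => Heq; subst b31; exact: (L4 _ _ _ _ (mE _ _ Ha2) (mE _ _ Hb22) (mE' _ _ Hb31) (mE' _ _ Ha3) (nsym vb22) n23).
have N_b22_b32 : b22 != b32 by apply/eqP => Heq; subst b32; exact: (L4 _ _ _ _ (mE _ _ Ha2) (mE _ _ Hb22) (mE' _ _ Hb32) (mE' _ _ Ha3) (nsym vb22) n23).
have N_b22_f1 : b22 != f1 by apply/eqP => Heq; subst f1; exact: (L4 _ _ _ _ (mE' _ _ Ha2) (mA _ _ Hw) (mE _ _ Hf1) (mE' _ _ Hb22) N_a2_w (nsym vb22)).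
have N_b22_f2 : b22 != f2 by apply/eqP => Heq; subst f2; exact: (L4 _ _ _ _ (mE' _ _ Ha2) (mA _ _ Hw) (mE _ _ Hf2) (mE' _ _ Hb22) N_a2_w (nsym vb22)).
have N_b22_f3 : b22 != f3 by apply/eqP => Heq; subst f3; exact: (L4 _ _ _ _ (mE' _ _ Ha2) (mA _ _ Hw) (mE _ _ Hf3) (mE' _ _ Hb22) N_a2_w (nsym vb22)).
have N_b22_p : b22 != p by apply/eqP => Heq; subst p; exact: (L4 _ _ _ _ (mE' _ _ Ha2) (mA _ _ Hw) (mA _ _ Hp) (mE' _ _ Hb22) N_a2_w (nsym vb22)).
have N_b22_k1 : b22 != k1 by apply/eqP => Heq; subst k1; exact: (L4 _ _ _ _ (mE _ _ Ha2) (mE _ _ Hb22) (mE' _ _ Hk1) (mA _ _ Hx) (nsym vb22) N_a2_x).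
have N_b22_k2 : b22 != k2 by apply/eqP => Heq; subst k2; exact: (L4 _ _ _ _ (mE _ _ Ha2) (mE _ _ Hb22) (mE' _ _ Hk2) (mA _ _ Hx) (nsym vb22) N_a2_x).
have N_b22_k3 : b22 != k3 by apply/eqP => Heq; subst k3; exact: (L4 _ _ _ _ (mE _ _ Ha2) (mE _ _ Hb22) (mE' _ _ Hk3) (mA _ _ Hx) (nsym vb22) N_a2_x).
have N_b22_q : b22 != q by apply/eqP => Heq; subst q; exact: (L4 _ _ _ _ (mE _ _ Ha2) (mE _ _ Hb22) (mA _ _ Hq) (mA _ _ Hx) (nsym vb22) N_a2_x).
have N_b31_f1 : b31 != f1 by apply/eqP => Heq; subst f1; exact: (L4 _ _ _ _ (mE' _ _ Ha3) (mA _ _ Hw) (mE _ _ Hf1) (mE' _ _ Hb31) N_a3_w (nsym vb31)).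
have N_b31_f2 : b31 != f2 by apply/eqP => Heq; subst f2; exact: (L4 _ _ _ _ (mE' _ _ Ha3) (mA _ _ Hw) (mE _ _ Hf2) (mE' _ _ Hb31) N_a3_w (nsym vb31)).
have N_b31_f3 : b31 != f3 by apply/eqP => Heq; subst f3; exact: (L4 _ _ _ _ (mE' _ _ Ha3) (mA _ _ Hw) (mE _ _ Hf3) (mE' _ _ Hb31) N_a3_w (nsym vb31)).
have N_b31_p : b31 != p by apply/eqP => Heq; subst p; exact: (L4 _ _ _ _ (mE' _ _ Ha3) (mA _ _ Hw) (mA _ _ Hp) (mE' _ _ Hb31) N_a3_w (nsym vb31)).
have N_b31_k1 : b31 != k1 by apply/eqP => Heq; subst k1; exact: (L4 _ _ _ _ (mE _ _ Ha3) (mE _ _ Hb31) (mE' _ _ Hk1) (mA _ _ Hx) (nsym vb31) N_a3_x).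
have N_b31_k2 : b31 != k2 by apply/eqP => Heq; subst k2; exact: (L4 _ _ _ _ (mE _ _ Ha3) (mE _ _ Hb31) (mE' _ _ Hk2) (mA _ _ Hx) (nsym vb31) N_a3_x).
have N_b31_k3 : b31 != k3 by apply/eqP => Heq; subst k3; exact: (L4 _ _ _ _ (mE _ _ Ha3) (mE _ _ Hb31) (mE' _ _ Hk3) (mA _ _ Hx) (nsym vb31) N_a3_x).
have N_b31_q : b31 != q by apply/eqP => Heq; subst q; exact: (L4 _ _ _ _ (mE _ _ Ha3) (mE _ _ Hb31) (mA _ _ Hq) (mA _ _ Hx) (nsym vb31) N_a3_x).
have N_b32_f1 : b32 != f1 by apply/eqP => Heq; subst f1; exact: (L4 _ _ _ _ (mE' _ _ Ha3) (mA _ _ Hw) (mE _ _ Hf1) (mE' _ _ Hb32) N_a3_w (nsym vb32)).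
have N_b32_f2 : b32 != f2 by apply/eqP => Heq; subst f2; exact: (L4 _ _ _ _ (mE' _ _ Ha3) (mA _ _ Hw) (mE _ _ Hf2) (mE' _ _ Hb32) N_a3_w (nsym vb32)).
have N_b32_f3 : b32 != f3 by apply/eqP => Heq; subst f3; exact: (L4 _ _ _ _ (mE' _ _ Ha3) (mA _ _ Hw) (mE _ _ Hf3) (mE' _ _ Hb32) N_a3_w (nsym vb32)).
have N_b32_p : b32 != p by apply/eqP => Heq; subst p; exact: (L4 _ _ _ _ (mE' _ _ Ha3) (mA _ _ Hw) (mA _ _ Hp) (mE' _ _ Hb32) N_a3_w (nsym vb32)).
have N_b32_k1 : b32 != k1 by apply/eqP => Heq; subst k1; exact: (L4 _ _ _ _ (mE _ _ Ha3) (mE _ _ Hb32) (mE' _ _ Hk1) (mA _ _ Hx) (nsym vb32) N_a3_x).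
have N_b32_k2 : b32 != k2 by apply/eqP => Heq; subst k2; exact: (L4 _ _ _ _ (mE _ _ Ha3) (mE _ _ Hb32) (mE' _ _ Hk2) (mA _ _ Hx) (nsym vb32) N_a3_x).
have N_b32_k3 : b32 != k3 by apply/eqP => Heq; subst k3; exact: (L4 _ _ _ _ (mE _ _ Ha3) (mE _ _ Hb32) (mE' _ _ Hk3) (mA _ _ Hx) (nsym vb32) N_a3_x).
have N_b32_q : b32 != q by apply/eqP => Heq; subst q; exact: (L4 _ _ _ _ (mE _ _ Ha3) (mE _ _ Hb32) (mA _ _ Hq) (mA _ _ Hx) (nsym vb32) N_a3_x).
have N_f1_p : f1 != p by apply/eqP => Heq; subst p; exact: (F3 _ _ Hp Hf1).
have N_f1_k1 : f1 != k1 by apply/eqP => Heq; subst k1; exact: (L4 _ _ _ _ (mE _ _ Hf1) (mE' _ _ Hk1) (mA _ _ Hx) (mA _ _ Hw) N_w_x (nsym N_v_f1)).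
have N_f1_k2 : f1 != k2 by apply/eqP => Heq; subst k2; exact: (L4 _ _ _ _ (mE _ _ Hf1) (mE' _ _ Hk2) (mA _ _ Hx) (mA _ _ Hw) N_w_x (nsym N_v_f1)).
have N_f1_k3 : f1 != k3 by apply/eqP => Heq; subst k3; exact: (L4 _ _ _ _ (mE _ _ Hf1) (mE' _ _ Hk3) (mA _ _ Hx) (mA _ _ Hw) N_w_x (nsym N_v_f1)).
have N_f1_q : f1 != q by apply/eqP => Heq; subst q; exact: (L4 _ _ _ _ (mE _ _ Hf1) (mA _ _ Hq) (mA _ _ Hx) (mA _ _ Hw) N_w_x (nsym N_v_f1)).
have N_f2_p : f2 != p by apply/eqP => Heq; subst p; exact: (F3 _ _ Hp Hf2).
have N_f2_k1 : f2 != k1 by apply/eqP => Heq; subst k1; exact: (L4 _ _ _ _ (mE _ _ Hf2) (mE' _ _ Hk1) (mA _ _ Hx) (mA _ _ Hw) N_w_x (nsym N_v_f2)).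
have N_f2_k2 : f2 != k2 by apply/eqP => Heq; subst k2; exact: (L4 _ _ _ _ (mE _ _ Hf2) (mE' _ _ Hk2) (mA _ _ Hx) (mA _ _ Hw) N_w_x (nsym N_v_f2)).
have N_f2_k3 : f2 != k3 by apply/eqP => Heq; subst k3; exact: (L4 _ _ _ _ (mE _ _ Hf2) (mE' _ _ Hk3) (mA _ _ Hx) (mA _ _ Hw) N_w_x (nsym N_v_f2)).
have N_f2_q : f2 != q by apply/eqP => Heq; subst q; exact: (L4 _ _ _ _ (mE _ _ Hf2) (mA _ _ Hq) (mA _ _ Hx) (mA _ _ Hw) N_w_x (nsym N_v_f2)).
have N_f3_p : f3 != p by apply/eqP => Heq; subst p; exact: (F3 _ _ Hp Hf3).
have N_f3_k1 : f3 != k1 by apply/eqP => Heq; subst k1; exact: (L4 _ _ _ _ (mE _ _ Hf3) (mE' _ _ Hk1) (mA _ _ Hx) (mA _ _ Hw) N_w_x (nsym N_v_f3)).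
have N_f3_k2 : f3 != k2 by apply/eqP => Heq; subst k2; exact: (L4 _ _ _ _ (mE _ _ Hf3) (mE' _ _ Hk2) (mA _ _ Hx) (mA _ _ Hw) N_w_x (nsym N_v_f3)).
have N_f3_k3 : f3 != k3 by apply/eqP => Heq; subst k3; exact: (L4 _ _ _ _ (mE _ _ Hf3) (mE' _ _ Hk3) (mA _ _ Hx) (mA _ _ Hw) N_w_x (nsym N_v_f3)).
have N_f3_q : f3 != q by apply/eqP => Heq; subst q; exact: (L4 _ _ _ _ (mE _ _ Hf3) (mA _ _ Hq) (mA _ _ Hx) (mA _ _ Hw) N_w_x (nsym N_v_f3)).
have N_p_k1 : p != k1 by apply/eqP => Heq; subst k1; exact: (L4 _ _ _ _ (mE' _ _ Hk1) (mA _ _ Hx) (mA _ _ Hw) (mA _ _ Hp) (nsym N_v_p) (nsym N_w_x)).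
have N_p_k2 : p != k2 by apply/eqP => Heq; subst k2; exact: (L4 _ _ _ _ (mE' _ _ Hk2) (mA _ _ Hx) (mA _ _ Hw) (mA _ _ Hp) (nsym N_v_p) (nsym N_w_x)).
have N_p_k3 : p != k3 by apply/eqP => Heq; subst k3; exact: (L4 _ _ _ _ (mE' _ _ Hk3) (mA _ _ Hx) (mA _ _ Hw) (mA _ _ Hp) (nsym N_v_p) (nsym N_w_x)).
have N_p_q : p != q by apply/eqP => Heq; subst q; exact: (L4 _ _ _ _ (mA _ _ Hw) (mA _ _ Hp) (mA _ _ Hq) (mA _ _ Hx) N_v_p N_w_x).
have N_k1_q : k1 != q by apply/eqP => Heq; subst q; exact: (F4 _ _ Hq Hk1).
have N_k2_q : k2 != q by apply/eqP => Heq; subst q; exact: (F4 _ _ Hq Hk2).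
have N_k3_q : k3 != q by apply/eqP => Heq; subst q; exact: (F4 _ _ Hq Hk3).
have HU : uniq [:: v; a1; a2; a3; w; x; b11; b12; b21; b22; b31; b32; f1; f2; f3; p; k1; k2; k3; q].
  rewrite /= !inE !negb_or.
  by rewrite N_v_a1 N_v_a2 N_v_a3 N_v_w N_v_x N_v_b11 N_v_b12 N_v_b21 N_v_b22 N_v_b31 N_v_b32 N_v_f1 N_v_f2 N_v_f3 N_v_p N_v_k1 N_v_k2 N_v_k3 N_v_q n12 n13 N_a1_w N_a1_x N_a1_b11 N_a1_b12 N_a1_b21 N_a1_b22 N_a1_b31 N_a1_b32 N_a1_f1 N_a1_f2 N_a1_f3 N_a1_p N_a1_k1 N_a1_k2 N_a1_k3 N_a1_q n23 N_a2_w N_a2_x N_a2_b11 N_a2_b12 N_a2_b21 N_a2_b22 N_a2_b31 N_a2_b32 N_a2_f1 N_a2_f2 N_a2_f3 N_a2_p N_a2_k1 N_a2_k2 N_a2_k3 N_a2_q N_a3_w N_a3_x N_a3_b11 N_a3_b12 N_a3_b21 N_a3_b22 N_a3_b31 N_a3_b32 N_a3_f1 N_a3_f2 N_a3_f3 N_a3_p N_a3_k1 N_a3_k2 N_a3_k3 N_a3_q N_w_x N_w_b11 N_w_b12 N_w_b21 N_w_b22 N_w_b31 N_w_b32 N_w_f1 N_w_f2 N_w_f3 N_w_p N_w_k1 N_w_k2 N_w_k3 N_w_q N_x_b11 N_x_b12 N_x_b21 N_x_b22 N_x_b31 N_x_b32 N_x_f1 N_x_f2 N_x_f3 N_x_p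 N_x_k1 N_x_k2 N_x_k3 N_x_q nb1 N_b11_b21 N_b11_b22 N_b11_b31 N_b11_b32 N_b11_f1 N_b11_f2 N_b11_f3 N_b11_p N_b11_k1 N_b11_k2 N_b11_k3 N_b11_q N_b12_b21 N_b12_b22 N_b12_b31 N_b12_b32 N_b12_f1 N_b12_f2 N_b12_f3 N_b12_p N_b12_k1 N_b12_k2 N_b12_k3 N_b12_q nb2 N_b21_b31 N_b21_b32 N_b21_f1 N_b21_f2 N_b21_f3 N_b21_p N_b21_k1 N_b21_k2 N_b21_k3 N_b21_q N_b22_b31 N_b22_b32 N_b22_f1 N_b22_f2 N_b22_f3 N_b22_p N_b22_k1 N_b22_k2 N_b22_k3 N_b22_q nb3 N_b31_f1 N_b31_f2 N_b31_f3 N_b31_p N_b31_k1 N_b31_k2 N_b31_k3 N_b31_q N_b32_f1 N_b32_f2 N_b32_f3 N_b32_p N_b32_k1 N_b32_k2 N_b32_k3 N_b32_q nf12 nf13 N_f1_p N_f1_k1 N_f1_k2 N_f1_k3 N_f1_q nf23 N_f2_p N_f2_k1 N_f2_k2 N_f2_k3 N_f2_q N_f3_p N_f3_k1 N_f3_k2 N_f3_k3 N_f3_q N_p_k1 N_p_k2 N_p_k3 N_p_q nk12 nk13 N_k1_q nk23 N_k2_q N_k3_q.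
have := uniq_leq_size HU (fun z _ => mem_enum 'I_n z).
by rewrite size_enum_ord.
Qed.

Lemma min_exists N : has_mixed_graph 1 3 5 N ->
  exists n, is_mixed_cage_order 1 3 5 n /\ n <= N.
Proof.
elim: N {-2}N (leqnn N) => [|N IH] M hM hg.
  exists M; split => //; split => // m _.
  by move: hM; rewrite leqn0 => /eqP ->.
case: (classic (exists m, m < M /\ has_mixed_graph 1 3 5 m)) => [[m [hm hgm]]|nex].
  have [n [hn hnm]] := IH m (leq_trans hm hM) hgm.
  by exists n; split => //; apply: leq_trans hnm (ltnW hm).
exists M; split => //; split => // m hgm.
rewrite leqNgt; apply/negP => hlt; apply: nex; by exists m.
Qed.

Theorem lemma4 :
  exists n, is_mixed_cage_order 1 3 5 n /\ 20 <= n <= 28.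
Proof.
have [n [[hg hmin] hn]] := min_exists upper.
exists n; split; first by split.
rewrite hn andbT.
case: hg => E [A h]; exact: lower h.
Qed.
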